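(* Let $n\ge2$ and $\omega\in\widetilde{S}_n$. Then $\omega$ contains $1342$ if and only if $\omega$ contains $231$; $\omega$ contains $2314$ if and only if it contains $231$; and $\omega$ contains $1423$ if and only if it contains $312$, which holds if and only if it contains $3124$.
   Context: For $n\ge 2$, the affine symmetric group $\widetilde{S}_n$ is the set of bijections $\omega:\mathbb{Z}\to\mathbb{Z}$ such that $\omega(i+n)=\omega(i)+n$ for all $i\in\mathbb{Z}$ and $\sum_{i=1}^n\omega(i)=\binom{n+1}{2}$; write $\omega_i=\omega(i)$. For $p\in S_k$, $\omega$ contains $p$ if there exist integers $i_1<\cdots<i_k$ such that $\omega_{i_1}\cdots\omega_{i_k}$ has the same relative order as $p_1\cdots p_k$; otherwise $\omega$ avoids $p$. *)

(* Defs.v *)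
From Stdlib Require Import ZArith List Lia.
Import ListNotations.
Open Scope Z_scope.

Fixpoint sum_1_to (f : Z -> Z) (n : nat) : Z :=
  match n with
  | O => 0
  | S m => sum_1_to f m + f (Z.of_nat (S m))
  end.

Definition affine_perm (n : nat) (w : Z -> Z) : Prop :=
  (forall x y, w x = w y -> x = y) /\
  (forall y, exists x, w x = y) /\
  (forall i, w (i + Z.of_nat n) = w i + Z.of_nat n) /\
  sum_1_to w n = Z.of_nat n * (Z.of_nat n + 1) / 2.

Fixpoint strictly_increasing (l : list Z) : Prop :=
  match l with
  | x :: ((y :: _) as t) => x < y /\ strictly_increasing t
  | _ => True
  end.

Definition contains (w : Z -> Z) (p : list Z) : Prop :=
  exists idx : list Z,
    length idx = length p /\ strictly_increasing idx /\
    forall a b : nat, (a < length p)%nat -> (b < length p)%nat ->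
      (w (nth a idx 0) < w (nth b idx 0) <-> nth a p 0 < nth b p 0).

Definition avoids (w : Z -> Z) (p : list Z) : Prop := ~ contains w p.

(* Main.v *)
Require Import Defs.
From Stdlib Require Import ZArith List Lia.
Import ListNotations.
Open Scope Z_scope.

Ltac build_back :=
  refine (conj eq_refl (conj _ _)); [simpl; lia|];
  let x := fresh "x" in let y := fresh "y" in
  let Ha := fresh "Ha" in let Hb := fresh "Hb" in
  intros x y Ha Hb;
  destruct x as [|[|[|[|x]]]]; destruct y as [|[|[|[|y]]]];
  simpl in Ha, Hb |- *; try lia; split; intros; lia.

Ltac get H x y := let G := fresh in
  pose proof (H x y ltac:(simpl; lia) ltac:(simpl; lia)) as G; simpl in G.

Lemma c231 w : contains w [2;3;1] <-> exists i j k, i<j /\ j<k /\ w k < w i /\ w i < w j.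
Proof.
  split.
  - intros [idx [Hl [Hs H]]].
    destruct idx as [|i [|j [|k [|]]]]; simpl in Hl; try discriminate.
    simpl in Hs. get H 2%nat 0%nat. get H 0%nat 1%nat.
    exists i, j, k. repeat split; try lia; tauto.
  - intros (i&j&k&?&?&?&?). exists [i;j;k]. build_back.
Qed.

Lemma c312 w : contains w [3;1;2] <-> exists i j k, i<j /\ j<k /\ w j < w k /\ w k < w i.
Proof.
  split.
  - intros [idx [Hl [Hs H]]].
    destruct idx as [|i [|j [|k [|]]]]; simpl in Hl; try discriminate.
    simpl in Hs. get H 1%nat 2%nat. get H 2%nat 0%nat.
    exists i, j, k. repeat split; try lia; tauto.
  - intros (i&j&k&?&?&?&?). exists [i;j;k]. build_back.
Qed.

Lemma c1342 w : contains w [1;3;4;2] <-> exists i j k l, i<j /\ j<k /\ k<l /\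
   w i < w l /\ w l < w j /\ w j < w k.
Proof.
  split.
  - intros [idx [Hl [Hs H]]].
    destruct idx as [|i [|j [|k [|l [|]]]]]; simpl in Hl; try discriminate.
    simpl in Hs. get H 0%nat 3%nat. get H 3%nat 1%nat. get H 1%nat 2%nat.
    exists i, j, k, l. repeat split; try lia; tauto.
  - intros (i&j&k&l&?&?&?&?&?&?). exists [i;j;k;l]. build_back.
Qed.

Lemma c2314 w : contains w [2;3;1;4] <-> exists i j k l, i<j /\ j<k /\ k<l /\
   w k < w i /\ w i < w j /\ w j < w l.
Proof.
  split.
  - intros [idx [Hl [Hs H]]].
    destruct idx as [|i [|j [|k [|l [|]]]]]; simpl in Hl; try discriminate.
    simpl in Hs. get H 2%nat 0%nat. get H 0%nat 1%nat. get H 1%nat 3%nat.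
    exists i, j, k, l. repeat split; try lia; tauto.
  - intros (i&j&k&l&?&?&?&?&?&?). exists [i;j;k;l]. build_back.
Qed.

Lemma c1423 w : contains w [1;4;2;3] <-> exists i j k l, i<j /\ j<k /\ k<l /\
   w i < w k /\ w k < w l /\ w l < w j.
Proof.
  split.
  - intros [idx [Hl [Hs H]]].
    destruct idx as [|i [|j [|k [|l [|]]]]]; simpl in Hl; try discriminate.
    simpl in Hs. get H 0%nat 2%nat. get H 2%nat 3%nat. get H 3%nat 1%nat.
    exists i, j, k, l. repeat split; try lia; tauto.
  - intros (i&j&k&l&?&?&?&?&?&?). exists [i;j;k;l]. build_back.
Qed.

Lemma c3124 w : contains w [3;1;2;4] <-> exists i j k l, i<j /\ j<k /\ k<l /\
   w j < w k /\ w k < w i /\ w i < w l.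
Proof.
  split.
  - intros [idx [Hl [Hs H]]].
    destruct idx as [|i [|j [|k [|l [|]]]]]; simpl in Hl; try discriminate.
    simpl in Hs. get H 1%nat 2%nat. get H 2%nat 0%nat. get H 0%nat 3%nat.
    exists i, j, k, l. repeat split; try lia; tauto.
  - intros (i&j&k&l&?&?&?&?&?&?). exists [i;j;k;l]. build_back.
Qed.

Lemma shift (w : Z -> Z) (N : Z) : (forall i, w (i + N) = w i + N) ->
  forall m i, w (i + Z.of_nat m * N) = w i + Z.of_nat m * N.
Proof.
  intros Hp m. induction m as [|m IH]; intro i.
  - simpl. rewrite !Z.add_0_r. reflexivity.
  - replace (i + Z.of_nat (S m) * N) with ((i + Z.of_nat m * N) + N) by lia.
    rewrite Hp, IH. lia.
Qed.

Lemma far_left (w : Z -> Z) (N : Z) : 1 <= N -> (forall i, w (i + N) = w i + N) ->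
  forall i B, exists t, t < i /\ w t < B.
Proof.
  intros HN Hp i B.
  set (m := Z.to_nat (Z.abs (w i - B) + 1)).
  exists (i - Z.of_nat m * N).
  pose proof (shift w N Hp m (i - Z.of_nat m * N)) as E.
  replace (i - Z.of_nat m * N + Z.of_nat m * N) with i in E by lia.
  assert (Hm : Z.of_nat m = Z.abs (w i - B) + 1) by (unfold m; lia).
  split; nia.
Qed.

Lemma far_right (w : Z -> Z) (N : Z) : 1 <= N -> (forall i, w (i + N) = w i + N) ->
  forall i B, exists t, i < t /\ B < w t.
Proof.
  intros HN Hp i B.
  set (m := Z.to_nat (Z.abs (w i - B) + 1)).
  exists (i + Z.of_nat m * N).
  pose proof (shift w N Hp m i) as E.
  assert (Hm : Z.of_nat m = Z.abs (w i - B) + 1) by (unfold m; lia).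
  split; nia.
Qed.

Theorem mainTheorem11 (n : nat) (w : Z -> Z) :
  (2 <= n)%nat -> affine_perm n w ->
  (contains w [1; 3; 4; 2] <-> contains w [2; 3; 1]) /\
  (contains w [2; 3; 1; 4] <-> contains w [2; 3; 1]) /\
  (contains w [1; 4; 2; 3] <-> contains w [3; 1; 2]) /\
  (contains w [3; 1; 2] <-> contains w [3; 1; 2; 4]).
Proof.
  intros Hn [_ [_ [Hp _]]].
  assert (HN : 1 <= Z.of_nat n) by lia.
  pose proof (far_left w _ HN Hp) as FL.
  pose proof (far_right w _ HN Hp) as FR.
  rewrite c1342, c231, c2314, c1423, c312, c3124.
  split; [|split; [|split]]; split.
  - intros (i&j&k&l&?&?&?&?&?&?). exists j, k, l. lia.
  - intros (i&j&k&?&?&?&?). destruct (FL i (w k)) as (t&?&?).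
    exists t, i, j, k. lia.
  - intros (i&j&k&l&?&?&?&?&?&?). exists i, j, k. lia.
  - intros (i&j&k&?&?&?&?). destruct (FR k (w j)) as (t&?&?).
    exists i, j, k, t. lia.
  - intros (i&j&k&l&?&?&?&?&?&?). exists j, k, l. lia.
  - intros (i&j&k&?&?&?&?). destruct (FL i (w j)) as (t&?&?).
    exists t, i, j, k. lia.
  - intros (i&j&k&?&?&?&?). destruct (FR k (w i)) as (t&?&?).
    exists i, j, k, t. lia.
  - intros (i&j&k&l&?&?&?&?&?&?). exists i, j, k. lia.
Qed.
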